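(* Let $p$ be prime, $f:\mathrm{GF}(p)^n\to\mathrm{GF}(p)$ a polynomial function, and $t=x_{i_1}^{m_1}\cdots x_{i_k}^{m_k}$ with distinct indices and $1\le m_\ell\le p-1$. Write $f=t\,f_{S(t)}+r$ where no monomial of $r$ is divisible by $t$. Then $\deg(f_t)\le\deg(f_{S(t)})$. In particular, if $\deg(t)=\deg(f)-1$, then $f_t$ has total degree at most one (it is linear or constant).
   Context: Polynomial functions over $\mathrm{GF}(p)$ are represented by their unique polynomial of degree at most $p-1$ in each variable; $\deg$ is total degree, and $f_{S(t)}, r$ are uniquely determined by this representative. $f_t=\Delta^{(m_1)}_{\mathbf{e}_{i_1},\ldots,\mathbf{e}_{i_1}}\cdots\Delta^{(m_k)}_{\mathbf{e}_{i_k},\ldots,\mathbf{e}_{i_k}} f$ (difference $m_\ell$ times w.r.t. $x_{i_\ell}$ with step $1$), where $(\Delta_{\mathbf{a}} f)(\mathbf{x}) = f(\mathbf{x}+\mathbf{a})-f(\mathbf{x})$. *)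

(* Defs.v *)
From HB Require Import structures.
From mathcomp Require Import all_boot all_order all_algebra.
Set Implicit Arguments. Unset Strict Implicit. Unset Printing Implicit Defensive.
Import GRing.Theory.
Local Open Scope ring_scope.

Definition pt (p n : nat) := 'I_n -> 'F_p.
(* Exponent vectors of reduced monomials: each exponent in {0,..,p-1}. *)
Definition expo (p n : nat) := {ffun 'I_n -> 'I_p}.

Definition mono (p n : nat) (e : expo p n) (x : pt p n) : 'F_p :=
  \prod_(i < n) x i ^+ e i.

(* A reduced polynomial is given by its coefficient function c on reduced
   exponent vectors; peval c is the polynomial function it induces. *)
Definition peval (p n : nat) (c : expo p n -> 'F_p) (x : pt p n) : 'F_p :=
  \sum_(e : expo p n) c e * mono e x.

Definition represents (p n : nat) (c : expo p n -> 'F_p) (g : pt p n -> 'F_p) :=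
  forall x, g x = peval c x.

(* Total degree of a reduced polynomial (0 for the zero polynomial). *)
Definition tdeg (p n : nat) (c : expo p n -> 'F_p) : nat :=
  \max_(e : expo p n | c e != 0%R) (\sum_(i < n) (e i : nat))%N.

(* Coefficient of the reduced polynomial c at an arbitrary exponent vector
   E : 'I_n -> nat (zero if E is not reduced). *)
Definition rcoefN (p n : nat) (c : expo p n -> 'F_p) (E : 'I_n -> nat) : 'F_p :=
  \sum_(e : expo p n | [forall i, (e i : nat) == E i]) c e.

Definition shift (p n : nat) (x : pt p n) (i : 'I_n) : pt p n :=
  fun j => if j == i then x j + 1 else x j.

Definition fdiff (p n : nat) (g : pt p n -> 'F_p) (i : 'I_n) : pt p n -> 'F_p :=
  fun x => g (shift x i) - g x.

Definition tdiff (p n k : nat) (idx : 'I_k -> 'I_n) (m : 'I_k -> nat)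
  (g : pt p n -> 'F_p) : pt p n -> 'F_p :=
  foldr (fun l h => iter (m l) (fun h' => fdiff h' (idx l)) h) g (enum 'I_k).

Definition texp (n k : nat) (idx : 'I_k -> 'I_n) (m : 'I_k -> nat) (j : 'I_n) : nat :=
  (\sum_(l < k | idx l == j) m l)%N.

(* Main.v *)
Require Import Defs.
From HB Require Import structures.
From mathcomp Require Import all_boot all_order all_algebra.
From mathcomp Require Import finfield zify.
From Stdlib Require Import FunctionalExtensionality.
Import GRing.Theory.
Local Open Scope ring_scope.

Definition Ssum (p j : nat) : 'F_p := \sum_(y : 'F_p) y ^+ j.

Lemma Fp_p0 p : prime p -> (p%:R : 'F_p) = 0.
Proof. by move=> hp; apply: pcharf0 (pchar_Fp hp). Qed.

Lemma Fp_pow p (hp : prime p) (y : 'F_p) : y ^+ p = y.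
Proof. by have := expf_card y; rewrite card_Fp. Qed.

Lemma S_shift p (hp : prime p) j : (0 < j)%N -> Ssum p (j + p.-1) = Ssum p j.
Proof.
move=> j0; rewrite /Ssum; apply: eq_bigr => y _.
have p1 := prime_gt1 hp.
have -> : (j + p.-1 = j.-1 + p)%N by rewrite -subn1; lia.
by rewrite exprD Fp_pow // -exprSr prednK.
Qed.

Lemma S_pm1 p (hp : prime p) : Ssum p p.-1 = -1.
Proof.
have p1 := prime_gt1 hp.
rewrite /Ssum (bigD1 0) //= expr0n.
have -> : (p.-1 == 0%N) = false by apply/eqP; lia.
rewrite add0r.
rewrite (eq_bigr (fun _ => 1)); last first.
  move=> y hy; apply: (mulfI hy); rewrite mulr1 -exprS prednK; last lia.
  exact: Fp_pow.
rewrite sumr_const.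
have -> : #|[pred i : 'F_p | i != 0]| = p.-1.
  by have := cardC1 (0:'F_p); rewrite card_Fp // => <-; apply: eq_card.
apply/eqP; rewrite -subr_eq0 opprK -mulrSr prednK; last lia.
by rewrite Fp_p0.
Qed.

Lemma S_lt p (hp : prime p) j : (j < p.-1)%N -> Ssum p j = 0.
Proof.
have p1 := prime_gt1 hp.
move=> hj; case: j hj => [|j] hj.
  rewrite /Ssum (eq_bigr (fun _ => 1)) ?sumr_const; last by move=> *; rewrite expr0.
  by rewrite card_Fp // Fp_p0.
have /existsP [a /andP[a0 aj]] : [exists a : 'F_p, (a != 0) && (a ^+ j.+1 != 1)].
  apply: contraT => /existsPn H.
  pose q : {poly 'F_p} := 'X^(j.+1) - 1%:P.
  have sq : size q = j.+2 by rewrite size_XnsubC.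
  have qn0 : q != 0 by rewrite -size_poly_gt0 sq.
  have := max_poly_roots qn0 _ (enum_uniq (predC1 (0 : 'F_p))).
  rewrite -cardE cardC1 card_Fp // sq.
  suff -> : all (root q) (enum (predC1 (0 : 'F_p))) by move=> /(_ isT); lia.
  apply/allP => x; rewrite mem_enum /= => x0.
  rewrite /root /q !hornerE subr_eq0.
  have x0' : x != 0 := x0.
  by apply/negPn/negP => hx; move: (H x); rewrite x0' hx.
have : Ssum p j.+1 * (a ^+ j.+1 - 1) = 0.
  apply/eqP; rewrite mulrBr mulr1 subr_eq0; apply/eqP.
  rewrite /Ssum [in RHS](reindex_inj (mulfI a0)) mulr_suml.
  by apply: eq_bigr => y _; rewrite exprMn mulrC.
by move/eqP; rewrite mulf_eq0 subr_eq0 (negbTE aj) orbF => /eqP.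
Qed.

Definition vw (p b : nat) (y : 'F_p) : 'F_p :=
  if b == 0%N then y ^+ p.-1 - 1 else y ^+ (p.-1 - b).

Lemma Kprop p (hp : prime p) a b : (a < p)%N -> (b < p)%N ->
  \sum_(y : 'F_p) y ^+ a * vw p b y = if a == b then -1 else 0.
Proof.
have p1 := prime_gt1 hp.
move=> ha hb; rewrite /vw.
case: b hb => [|b] hb /=.
  under eq_bigr do rewrite mulrBr mulr1 -exprD.
  rewrite sumrB -/(Ssum p (a + p.-1)) -/(Ssum p a).
  case: a ha => [|a] ha /=.
    rewrite add0n S_pm1 // S_lt // ?subr0 //; lia.
  by rewrite S_shift // subrr.
under eq_bigr do rewrite -exprD.
rewrite -/(Ssum p (a + (p.-1 - b.+1))).
case: (ltngtP a b.+1) => hab.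
all: first [ rewrite S_lt //; lia
  | rewrite (_ : (a + (p.-1 - b.+1) = (a - b.+1) + p.-1)%N); [rewrite S_shift ?S_lt //; lia | lia]
  | rewrite hab (_ : (b.+1 + (p.-1 - b.+1) = p.-1)%N) ?S_pm1 //; lia ].
Qed.

Lemma peval_coef p n (hp : prime p) (c : expo p n -> 'F_p) (b : expo p n) :
  \sum_(x : {ffun 'I_n -> 'F_p}) peval c x * \prod_(i < n) vw p (b i) (x i)
  = c b * (-1) ^+ n.
Proof.
rewrite /peval.
under eq_bigr do rewrite mulr_suml.
rewrite exchange_big /=.
under eq_bigr => e _.
  under eq_bigr do rewrite -mulrA /mono -big_split /=.
  rewrite -mulr_sumr -(bigA_distr_bigA (fun i y => y ^+ e i * vw p (b i) y)).
  under eq_bigr do rewrite Kprop //.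
  over.
rewrite (bigD1 b) //= [X in _ + X]big1 ?addr0.
  by congr (_ * _); under eq_bigr do rewrite eqxx; rewrite prodr_const card_ord.
move=> e he.
have /existsP [i hi] : [exists i, e i != b i].
  apply: contraR he => /existsPn H; apply/eqP/ffunP => i; apply/eqP.
  by move: (H i); rewrite negbK.
have hi' : (e i : nat) != b i by [].
by rewrite (bigD1 i) //= (negbTE hi') mul0r mulr0.
Qed.

Lemma peval_inj p n (hp : prime p) (c1 c2 : expo p n -> 'F_p) :
  (forall x, peval c1 x = peval c2 x) -> forall e, c1 e = c2 e.
Proof.
move=> H e.
have := @peval_coef p n hp c1 e; rewrite (eq_bigr (fun x : {ffun 'I_n -> 'F_p} => peval c2 x * \prod_(i < n) vw p (e i) (x i))).
  by rewrite peval_coef // => /mulIf h; rewrite h // signr_eq0.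
by move=> x _; rewrite H.
Qed.

Definition Qp {p n} (P : expo p n -> Prop) (g : pt p n -> 'F_p) :=
  exists c, represents c g /\ forall e, c e != 0 -> P e.

Lemma Q0 {p n} (P : expo p n -> Prop) : Qp P (fun _ => 0).
Proof.
exists (fun _ => 0); split => [x|e]; last by rewrite eqxx.
by rewrite /peval big1 // => e _; rewrite mul0r.
Qed.

Lemma Qext {p n} {P : expo p n -> Prop} {g h} :
  Qp P g -> (forall x, g x = h x) -> Qp P h.
Proof. by move=> [c [hc hs]] H; exists c; split => // x; rewrite -H. Qed.

Lemma Qeq {p n} {P : expo p n -> Prop} {g h} :
  (forall x, h x = g x) -> Qp P g -> Qp P h.
Proof. by move=> H Q; apply: Qext Q _ => x; rewrite H. Qed.

Lemma Qweak {p n} {P : expo p n -> Prop} (P' : expo p n -> Prop) {g} :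
  Qp P g -> (forall e, P e -> P' e) -> Qp P' g.
Proof. by move=> [c [hc hs]] H; exists c; split => // e /hs /H. Qed.

Lemma QD {p n} {P : expo p n -> Prop} {g h} :
  Qp P g -> Qp P h -> Qp P (fun x => g x + h x).
Proof.
move=> [c [hc hs]] [d [hd hds]]; exists (fun e => c e + d e); split.
  by move=> x; rewrite hc hd /peval -big_split; apply: eq_bigr => e _; rewrite mulrDl.
move=> e; case: (boolP (c e == 0)) => [/eqP ->|/hs //]; rewrite add0r; exact: hds.
Qed.

Lemma QZ {p n} {P : expo p n -> Prop} (a : 'F_p) {g} :
  Qp P g -> Qp P (fun x => a * g x).
Proof.
move=> [c [hc hs]]; exists (fun e => a * c e); split.
  by move=> x; rewrite hc /peval mulr_sumr; apply: eq_bigr => e _; rewrite mulrA.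
by move=> e; rewrite mulf_eq0 negb_or => /andP [_ /hs].
Qed.

Lemma Qsum {p n} {P : expo p n -> Prop} {I : Type} (r : seq I) {F : I -> pt p n -> 'F_p} :
  (forall i, Qp P (F i)) -> Qp P (fun x => \sum_(i <- r) F i x).
Proof.
move=> H; elim: r => [|i r IH].
  by apply: Qext (Q0 P) _ => x; rewrite big_nil.
by apply: Qext (QD (H i) IH) _ => x; rewrite big_cons.
Qed.

Lemma Qmono {p n} {P : expo p n -> Prop} {e : expo p n} : P e -> Qp P (mono e).
Proof.
move=> He; exists (fun e' => if e' == e then 1 else 0); split.
  move=> x; rewrite /peval (bigD1 e) //= eqxx mul1r big1 ?addr0 // => e' /negbTE ->.
  by rewrite mul0r.
by move=> e'; case: (e' =P e) => [-> //|]; rewrite eqxx.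
Qed.

Definition box {p n} (B : 'I_n -> nat) (e : expo p n) : Prop := forall j, (e j <= B j)%N.

Definition linop {p n} (T : (pt p n -> 'F_p) -> (pt p n -> 'F_p)) :=
  forall (r : seq (expo p n)) (a : expo p n -> 'F_p) (F : expo p n -> pt p n -> 'F_p),
  T (fun y => \sum_(e <- r) a e * F e y) = fun x => \sum_(e <- r) a e * T (F e) x.

Lemma lin_fdiff {p n} (i : 'I_n) : @linop p n (fun h => fdiff h i).
Proof.
move=> r a F; apply: functional_extensionality => x.
by rewrite /fdiff -sumrB; apply: eq_bigr => e _; rewrite mulrBr.
Qed.

Lemma lin_iter {p n} (i : 'I_n) m : @linop p n (iter m (fun h => fdiff h i)).
Proof.
elim: m => [//|m IH] r a F /=.
by rewrite IH lin_fdiff.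
Qed.

Definition Fold {p n k} (idx : 'I_k -> 'I_n) (m : 'I_k -> nat) (s : seq 'I_k)
  (g : pt p n -> 'F_p) : pt p n -> 'F_p :=
  foldr (fun l h => iter (m l) (fun h' => fdiff h' (idx l)) h) g s.

Lemma lin_Fold {p n k} (idx : 'I_k -> 'I_n) m s : @linop p n (Fold idx m s).
Proof.
elim: s => [//|l s IH] r a F /=.
by move: (IH r a F); rewrite /Fold /= => ->; rewrite lin_iter.
Qed.

Definition upd {p n} (e : expo p n) (i : 'I_n) (b : 'I_(e i)) : expo p n :=
  [ffun j => if j == i then widen_ord (ltnW (ltn_ord (e i))) b else e j].

Lemma fdiff_mono {p n} (e : expo p n) (i : 'I_n) x :
  fdiff (mono e) i x = \sum_(b < e i) mono (upd e i b) x *+ 'C(e i, b).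
Proof.
set R := \prod_(j < n | j != i) x j ^+ e j.
have E1 : mono e (shift x i) = (x i + 1) ^+ e i * R.
  rewrite /mono (bigD1 i) //= /shift eqxx; congr (_ * _).
  by apply: eq_bigr => j /negbTE ->.
have E2 : mono e x = x i ^+ e i * R by rewrite /mono (bigD1 i).
have E3 : forall b, mono (upd e i b) x = x i ^+ b * R.
  move=> b; rewrite /mono (bigD1 i) //= ffunE eqxx /=; congr (_ * _).
  by apply: eq_bigr => j /negbTE hj; rewrite ffunE hj.
rewrite /fdiff E1 E2 exprD1n big_ord_recr /= binn mulr1n mulrDl addrK mulr_suml.
by apply: eq_bigr => b _; rewrite E3 mulrnAl.
Qed.

Lemma fdiff_peval {p n} (c : expo p n -> 'F_p) (i : 'I_n) x :
  fdiff (peval c) i x = \sum_(e : expo p n) c e * fdiff (mono e) i x.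
Proof. by rewrite /peval (lin_fdiff i). Qed.

Lemma Qfdiff {p n} (B : 'I_n -> nat) (i : 'I_n) (g : pt p n -> 'F_p) :
  Qp (box B) g ->
  Qp (box (fun j => if j == i then B j - 1 else B j)%N) (fun x => fdiff g i x) /\
  ((B i = 0)%N -> forall x, fdiff g i x = 0).
Proof.
move=> [c [hc hs]].
have Eg : forall x, fdiff g i x = \sum_(e : expo p n) c e * fdiff (mono e) i x.
  by move=> x; rewrite -fdiff_peval /fdiff !hc.
split.
  apply: (Qeq Eg); apply: Qsum => e.
  case: (boolP (c e == 0)) => [/eqP ->|/hs He].
    by apply: Qext (Q0 _) _ => x; rewrite mul0r.
  apply: QZ; apply: (Qeq (fdiff_mono e i)).
  apply: Qsum => b; apply: (Qeq (fun x => esym (mulr_natl _ _))).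
  apply: QZ; apply: Qmono => j; rewrite ffunE.
  case: (j =P i) => [->|_] /=; last exact: He.
  by have := He i; have := ltn_ord b; lia.
move=> Bi x; rewrite Eg big1 // => e _.
case: (boolP (c e == 0)) => [/eqP ->|/hs He]; first by rewrite mul0r.
rewrite fdiff_mono big1 ?mulr0 // => b _.
by have := He i; have := ltn_ord b; lia.
Qed.

Lemma iter_zero {p n} (i : 'I_n) m (g : pt p n -> 'F_p) :
  (forall x, g x = 0) -> forall x, iter m (fun h => fdiff h i) g x = 0.
Proof.
move=> H; elim: m => [//|m IH] x /=.
by rewrite /fdiff !IH subrr.
Qed.

Lemma Qiter {p n} (B : 'I_n -> nat) (i : 'I_n) m (g : pt p n -> 'F_p) :
  Qp (box B) g ->
  Qp (box (fun j => if j == i then B j - m else B j)%N) (iter m (fun h => fdiff h i) g) /\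
  ((B i < m)%N -> forall x, iter m (fun h => fdiff h i) g x = 0).
Proof.
move=> HQ; elim: m => [|m [IHq IHz]].
  split => //; apply: (Qweak _ HQ) => e He j; case: (j == i); rewrite ?subn0; exact: He.
have [Q1 Z1] := Qfdiff _ i _ IHq.
split.
  apply: (Qweak _ Q1).
  move=> e He j; have := He j; case: (j == i); lia.
move=> hB.
case: (ltnP (B i) m) => hBm.
  by move=> x /=; rewrite /fdiff !IHz // subrr.
by move=> x; apply: Z1; rewrite eqxx; lia.
Qed.

Lemma Qfold {p n k} (idx : 'I_k -> 'I_n) (m : 'I_k -> nat) (B : 'I_n -> nat)
  (g : pt p n -> 'F_p) (s : seq 'I_k) :
  Qp (box B) g ->
  Qp (box (fun j => B j - \sum_(l <- s | idx l == j) m l)%N) (Fold idx m s g) /\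
  (has (fun l => B (idx l) < m l)%N s -> forall x, Fold idx m s g x = 0).
Proof.
move=> HQ; elim: s => [|l s [IHq IHz]].
  split => //; apply: (Qweak _ HQ) => e He j; rewrite big_nil subn0; exact: He.
have [Q1 Z1] := Qiter _ (idx l) (m l) _ IHq.
split.
  rewrite /Fold /= -/(Fold idx m s g); apply: (Qweak _ Q1) => e He j.
  have := He j; rewrite big_cons eq_sym; case: (idx l == j); lia.
rewrite /= => /orP [hl|hs] x.
  rewrite /Fold /= -/(Fold idx m s g); apply: Z1; lia.
rewrite /Fold /= -/(Fold idx m s g); exact: iter_zero (IHz hs) x.
Qed.

Lemma rcoefN_val {p n} (c : expo p n -> 'F_p) (e : expo p n) :
  rcoefN c (fun j => e j) = c e.
Proof.
rewrite /rcoefN (big_pred1 e) // => e'; apply/forallP/eqP => [H|-> //].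
by apply/ffunP => i; apply/val_inj/eqP/H.
Qed.

Lemma rcoefN_nz {p n} (c : expo p n -> 'F_p) (E : 'I_n -> nat) :
  rcoefN c E != 0 -> exists e, c e != 0 /\ forall j, (e j : nat) = E j.
Proof.
move=> H.
have /existsP [e /andP [h1 /forallP h2]] :
    [exists e, (c e != 0) && [forall i, (e i : nat) == E i]].
  apply: contraT => /existsPn H0; move: H; rewrite /rcoefN big1 ?eqxx // => e he.
  by move: (H0 e); rewrite he andbT negbK => /eqP.
by exists e; split => // j; apply/eqP.
Qed.

Lemma ts_enum {n k} (idx : 'I_k -> 'I_n) (m : 'I_k -> nat) j :
  (\sum_(l <- enum 'I_k | idx l == j) m l = texp idx m j)%N.
Proof. by rewrite big_enum_cond /texp; apply: eq_bigl => l. Qed.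

Lemma texp_idx {n k} (idx : 'I_k -> 'I_n) (m : 'I_k -> nat) l :
  injective idx -> texp idx m (idx l) = m l.
Proof. by move=> hidx; rewrite /texp (big_pred1 l) // => l'; rewrite /= (inj_eq hidx). Qed.

Lemma div_has {n k} (idx : 'I_k -> 'I_n) (m : 'I_k -> nat) (E : 'I_n -> nat) :
  injective idx -> ~~ [forall j, texp idx m j <= E j]%N ->
  has (fun l => E (idx l) < m l)%N (enum 'I_k).
Proof.
move=> hidx /forallPn [j hj].
case: (pickP (fun l => idx l == j)) => [l /eqP hl | H0].
  apply/hasP; exists l; first by rewrite mem_enum.
  by move: hj; rewrite -hl texp_idx // -ltnNge.
by move: hj; rewrite /texp big_pred0.
Qed.

Lemma deg_texp {n k} (idx : 'I_k -> 'I_n) (m : 'I_k -> nat) :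
  (\sum_(j < n) texp idx m j = \sum_(l < k) m l)%N.
Proof.
rewrite [RHS](partition_big idx predT) //.
Qed.

Definition deg {p n} (e : expo p n) : nat := (\sum_(i < n) (e i : nat))%N.

Theorem mainTheorem8 (p n k : nat) (hp : prime p)
  (idx : 'I_k -> 'I_n) (m : 'I_k -> nat)
  (hidx : injective idx) (hm : forall l, (0 < m l < p)%N)
  (c cS cr : expo p n -> 'F_p)
  (hdec : forall E : 'I_n -> nat,
     rcoefN c E =
       (if [forall j, texp idx m j <= E j]%N
        then rcoefN cS (fun j => E j - texp idx m j)%N else 0)
       + rcoefN cr E)
  (hr : forall e, cr e != 0 -> ~~ [forall j, texp idx m j <= e j]%N) :
  let ft := tdiff idx m (peval c) in
  (exists c', represents c' ft) /\
  (forall c', represents c' ft -> (tdeg c' <= tdeg cS)%N) /\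
  ((forall e, cS e = 0) -> forall x, ft x = 0) /\
  ((\sum_(l < k) m l).+1 = tdeg c ->
     forall c', represents c' ft -> (tdeg c' <= 1)%N).
Proof.
move=> ft.
pose T := @Fold p n k idx m (enum 'I_k).
have Tlin : ft = fun x => \sum_(e : expo p n) c e * T (mono e) x.
  have -> : ft = T (fun y => \sum_(e : expo p n) c e * mono e y) by [].
  by rewrite /T lin_Fold.
have term : forall e, c e = 0 \/ (forall x, T (mono e) x = 0) \/
   (exists e', cS e' != 0 /\ (forall j, (e' j : nat) = e j - texp idx m j)%N /\
     Qp (box (fun j => e j - texp idx m j)%N) (T (mono e))).
  move=> e; case: (boolP (c e == 0)) => [/eqP|ce]; first by left.
  right.
  have Qm : Qp (box (fun j => (e j : nat))) (mono e) by apply: Qmono.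
  have [Q1 Z1] := Qfold idx m _ _ (enum 'I_k) Qm.
  case: (boolP [forall j, texp idx m j <= e j]%N) => hdiv; last first.
    by left; apply: Z1; exact: (div_has idx m (fun j => (e j : nat)) hidx hdiv).
  right.
  have := hdec (fun j => e j); rewrite rcoefN_val hdiv rcoefN_val.
  have -> : cr e = 0.
    by case: (boolP (cr e == 0)) => [/eqP //|/hr]; rewrite hdiv.
  rewrite addr0 => hce.
  have [e' [he' hv]] := @rcoefN_nz p n cS _ (eq_ind _ (fun z => z != 0) ce _ hce).
  exists e'; split => //; split => //.
  by apply: (Qweak _ Q1) => e'' He j; rewrite -ts_enum; exact: He.
have Rep : Qp (fun e'' => deg e'' <= tdeg cS)%N ft.
  rewrite Tlin; apply: Qsum => e.
  case: (term e) => [->|[Z|[e' [h1 [h2 h3]]]]].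
  - by apply: (Qeq (fun x => mul0r _)); apply: Q0.
  - by apply: (Qeq (fun x => etrans (congr1 _ (Z x)) (mulr0 _))); apply: Q0.
  apply: QZ; apply: (Qweak _ h3) => e'' He.
  apply: leq_trans (_ : deg e' <= _)%N; last first.
    exact: (@leq_bigmax_cond _ (fun e => cS e != 0) (fun e : expo p n => \sum_(i < n) (e i : nat))%N e').
  by rewrite /deg; apply: leq_sum => j _; rewrite h2; exact: He.
have C2 : forall c', represents c' ft -> (tdeg c' <= tdeg cS)%N.
  move=> c' hc'; case: Rep => c0 [hc0 hs0].
  have E : forall e, c' e = c0 e by apply: (@peval_inj p n hp) => x; rewrite -hc' -hc0.
  by apply/bigmax_leqP => e; rewrite E => /hs0.
split; first by case: Rep => c0 [? _]; exists c0.
split => //.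
split.
  move=> hS x; rewrite Tlin big1 // => e _.
  case: (term e) => [->|[Z|[e' [h1 _]]]]; first by rewrite mul0r.
    by rewrite Z mulr0.
  by rewrite hS eqxx in h1.
move=> hsum c' hc'; apply: leq_trans (C2 c' hc') _.
apply/bigmax_leqP => e' he'.
pose E := (fun j => e' j + texp idx m j)%N.
have := hdec E.
have -> : [forall j, texp idx m j <= E j]%N by apply/forallP => j; rewrite leq_addl.
have -> : (fun j => E j - texp idx m j)%N = (fun j => e' j)
  by apply: functional_extensionality => j; rewrite /E addnK.
rewrite rcoefN_val.
have -> : rcoefN cr E = 0.
  rewrite /rcoefN big1 // => e'' /forallP H.
  case: (boolP (cr e'' == 0)) => [/eqP //|/hr/negP[]].
  by apply/forallP => j; rewrite (eqP (H j)) leq_addl.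
rewrite addr0 => hcE.
have [e'' [h1 h2]] := @rcoefN_nz p n c E (eq_ind _ (fun z => z != 0) he' _ (esym hcE)).
have := @leq_bigmax_cond _ (fun e => c e != 0) (fun e : expo p n => \sum_(i < n) (e i : nat))%N e'' h1.
rewrite -/(tdeg c) -hsum.
have -> : (\sum_(i < n) (e'' i : nat) = \sum_(i < n) (e' i : nat) + \sum_(l < k) m l)%N.
  by rewrite -(deg_texp idx) -big_split; apply: eq_bigr => j _; rewrite h2.
by rewrite -addn1 addnC leq_add2l.
Qed.
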